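(* For every $v\in\overline{C}$, the set $T(v)$ is a clique in $G$.
   Context: All graphs are simple. $\mathcal{G}^*$ denotes the class of graphs in which any two distinct odd cycles share at most one edge. Standing setting: $G\in\mathcal{G}^*$ is $2$-connected, and $C$ is a longest odd cycle of $G$ with $|C|\ge 5$. We also write $C$ for its vertex set. Let $\overline{C}=V(G)\setminus C$, assumed nonempty. For $v\in\overline{C}$ and $w\in C$, $v$ touches $w$ if there is a $v,w$-path meeting $C$ only at $w$. $T(v)=\{w\in C: v \text{ touches } w\}$. *)

(* Defs.v *)
From mathcomp Require Import all_boot.
Set Implicit Arguments. Unset Strict Implicit. Unset Printing Implicit Defensive.

Section Graphs.
Variables (T : finType) (e : rel T).

Definition simple_graph : Prop := symmetric e /\ irreflexive e.

Definition is_cycle (c : seq T) : Prop :=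
  [/\ 3 <= size c, uniq c & cycle e c].

Definition odd_cycle (c : seq T) : Prop := is_cycle c /\ odd (size c).

Definition cycle_edges (c : seq T) : {set {set T}} :=
  [set [set x; next c x] | x in c].

(* Class G*: any two distinct odd cycles (distinct as subgraphs, i.e. different
   edge sets) share at most one edge. *)
Definition in_Gstar : Prop :=
  forall c1 c2, odd_cycle c1 -> odd_cycle c2 ->
    cycle_edges c1 != cycle_edges c2 ->
    #|cycle_edges c1 :&: cycle_edges c2| <= 1.

Definition del_rel (x : T) : rel T := fun a b => [&& e a b, a != x & b != x].

Definition two_connected : Prop :=
  [/\ 2 < #|T|,
      (forall u v, connect e u v) &
      (forall x u v, u != x -> v != x -> connect (del_rel x) u v)].

Definition longest_odd_cycle (C : seq T) : Prop :=
  odd_cycle C /\ forall D, odd_cycle D -> size D <= size C.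

Definition touches (C : seq T) (v w : T) : Prop :=
  v \notin C /\ w \in C /\
  exists p : seq T, [/\ path e v p, last v p = w, uniq (v :: p) &
                        forall u, u \in v :: p -> u \in C -> u = w].

Definition touch_set (C : seq T) (v : T) : T -> Prop := fun w => touches C v w.

Definition is_clique (S : T -> Prop) : Prop :=
  forall x y, S x -> S y -> x != y -> e x y.

End Graphs.

(* Main.v *)
Require Import Defs.
From mathcomp Require Import all_boot.
From mathcomp Require Import zify.

Set Implicit Arguments. Unset Strict Implicit. Unset Printing Implicit Defensive.

Section Helpers.
Variables (T : finType) (e : rel T).

Lemma next_mid (l m : seq T) a b :
  uniq (l ++ a :: b :: m) -> next (l ++ a :: b :: m) a = b.
Proof.
move=> U; rewrite next_nth mem_cat inE eqxx orbT.
have al : a \notin l.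
  move: U; rewrite cat_uniq => /and3P [_ /hasPn H _].
  exact: (H a (mem_head _ _)).
have Hi : index a (l ++ a :: b :: m) = size l by rewrite index_cat (negbTE al) /= eqxx addn0.
rewrite Hi; case: l U al Hi => [|y l] //= U al Hi.
by rewrite nth_cat ltnNge leqnSn /= subSnn.
Qed.

Lemma edge_mid (l m : seq T) a b :
  uniq (l ++ a :: b :: m) -> [set a; b] \in cycle_edges (l ++ a :: b :: m).
Proof.
move=> U; apply/imsetP; exists a; first by rewrite mem_cat inE eqxx orbT.
by rewrite next_mid.
Qed.

Lemma edge_mem (c : seq T) a b : [set a; b] \in cycle_edges c -> b \in c.
Proof.
case/imsetP => z zc E.
have : b \in [set a; b] by rewrite !inE eqxx orbT.
rewrite E !inE => /orP [/eqP -> // | /eqP ->]; by rewrite mem_next.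
Qed.

Lemma keyL x y (A B r : seq T) :
  in_Gstar e -> odd_cycle e (x :: A ++ y :: B) -> ~~ e x y -> r != [::] ->
  path e y (rcons r x) -> uniq r ->
  (forall u, u \in r -> u \notin x :: A ++ y :: B) ->
  odd (size (x :: A ++ y :: r)) -> False.
Proof.
move=> hG [[sC uC cC] oC] nxy rn pr ur rC oD.
have cC' := cC; rewrite /= rcons_cat /= cat_path /= in cC'.
case/and3P: cC' => pA eAy pB.
case: A => [|a0 A'] in nxy pA eAy oC uC cC rC oD sC *.
  by rewrite /= in eAy; rewrite eAy in nxy.
set A := a0 :: A' in pA eAy oC uC cC rC oD sC *.
case: r => [|r0 r'] // in rn pr ur rC oD *.
set D := x :: A ++ y :: r0 :: r'.
set Cx := x :: A ++ y :: B.
have s1C : {subset x :: A ++ [:: y] <= Cx}.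
  move=> u; rewrite /Cx !inE !mem_cat !inE.
  by case: (u == x); case: (u == a0); case: (u \in A'); case: (u == y).
have uD : uniq D.
  have -> : D = (x :: A ++ [:: y]) ++ r0 :: r' by rewrite /D /= -catA.
  rewrite cat_uniq ur andbT; apply/andP; split.
    have : uniq ((x :: A ++ [:: y]) ++ B) by rewrite /= -catA.
    by rewrite cat_uniq => /andP [].
  apply/hasPn => u /rC uC'; apply/negP => /s1C; by rewrite (negbTE uC').
have cD : cycle e D.
  move: pA eAy pr; rewrite /D /A /= ?rcons_cat ?cat_path /=.
  by move=> /andP [-> ->] -> ->.
have oDc : odd_cycle e D.
  split; last exact: oD.
  split; [|exact: uD|exact: cD]; rewrite /D /A /=; rewrite size_cat /=; lia.
have oCc : odd_cycle e Cx by split => //; split.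
have Ey : [set y; r0] \in cycle_edges D.
  have -> : D = (x :: A) ++ y :: r0 :: r' by [].
  apply: edge_mid; by [].
have neq : cycle_edges D != cycle_edges Cx.
  apply/negP => /eqP E; move: Ey; rewrite E => /edge_mem.
  by rewrite (negbTE (rC r0 (mem_head _ _))).
have := hG D Cx oDc oCc neq.
have E1D : [set x; a0] \in cycle_edges D.
  have -> : D = [::] ++ x :: a0 :: (A' ++ y :: r0 :: r') by [].
  by apply: edge_mid.
have E1C : [set x; a0] \in cycle_edges Cx.
  have -> : Cx = [::] ++ x :: a0 :: (A' ++ y :: B) by [].
  by apply: edge_mid.
have hA : A = rcons (belast a0 A') (last a0 A') by exact: lastI.
move: (belast a0 A') (last a0 A') hA => l al hA.
have E2D : [set al; y] \in cycle_edges D.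
  have -> : D = (x :: l) ++ al :: y :: r0 :: r' by rewrite /D hA /= cat_rcons.
  by apply: edge_mid; rewrite -[_ ++ _]/(x :: l ++ al :: y :: r0 :: r') -cat_rcons -hA.
have E2C : [set al; y] \in cycle_edges Cx.
  have -> : Cx = (x :: l) ++ al :: y :: B by rewrite /Cx hA /= cat_rcons.
  by apply: edge_mid; rewrite -[_ ++ _]/(x :: l ++ al :: y :: B) -cat_rcons -hA.
have ne12 : [set x; a0] != [set al; y].
  apply/negP => /eqP E.
  have : y \in [set x; a0] by rewrite E !inE eqxx orbT.
  rewrite !inE => /orP [] /eqP Ey'.
    move: uC; rewrite cons_uniq => /andP [H _]; apply: (negP H).
    by rewrite mem_cat Ey' mem_head orbT.
  move: uC; rewrite cons_uniq => /andP [_]; rewrite cat_uniq => /and3P [_ /hasPn H _].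
  by move: (H y (mem_head _ _)); rewrite Ey' /A inE eqxx.
have : [set [set x; a0]; [set al; y]] \subset cycle_edges D :&: cycle_edges Cx.
  by apply/subsetP => z; rewrite !inE => /orP [] /eqP ->; rewrite ?E1D ?E1C ?E2D ?E2C.
move/subset_leq_card; rewrite cards2 ne12 => H1 H2.
have := leq_trans H1 H2; by [].
Qed.

End Helpers.

Theorem mainTheorem5 (T : finType) (e : rel T) (C : seq T) :
  simple_graph e -> in_Gstar e -> two_connected e ->
  longest_odd_cycle e C -> 5 <= size C ->
  forall v : T, v \notin C ->
  is_clique e (touch_set e C v).
Proof.
move=> [esym eirr] hG _ [oC _] _ v vC w1 w2 [_ [w1C [p1 [pp1 l1 _ in1]]]]
  [_ [w2C [p2 [pp2 l2 _ in2]]]] ne12.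
case E12: (e w1 w2) => //; exfalso.
have flip : forall x p, path (fun z => e^~ z) x p = path e x p.
  by move=> x p; apply: eq_path => a b; rewrite /= esym.
case: p1 pp1 l1 in1 => [|y1 p1] pp1 l1 in1.
  by rewrite /= in l1; rewrite l1 w1C in vC.
set s := rev (belast v (y1 :: p1)) ++ p2.
have ps : path e w1 s.
  rewrite /s cat_path; apply/andP; split.
    by rewrite -l1 rev_path flip.
  by rewrite [belast _ _]/= rev_cons last_rcons.
have ls : last w1 s = w2.
  by rewrite /s last_cat [belast _ _]/= rev_cons last_rcons.
have sC : forall u, u \in s -> u \in C -> u = w1 \/ u = w2.
  move=> u; rewrite /s mem_cat mem_rev => /orP [/mem_belast H uC | H uC].
    by left; apply: in1.
  by right; apply: in2 => //; rewrite inE H orbT.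
move: ls; case: (shortenP ps) => p' pp' up' sub' lp'.
case/lastP: p' pp' up' sub' lp' => [|q z] pp' up' sub'.
  by move=> /= E; rewrite E eqxx in ne12.
rewrite last_rcons => Ez; subst z.
have qC : forall u, u \in q -> u \notin C.
  move=> u uq; apply/negP => uC.
  have us : u \in s by apply: sub'; rewrite mem_rcons inE uq orbT.
  move: up'; rewrite /= mem_rcons inE rcons_uniq negb_or => /andP [/andP [_ w1q] /andP [w2q _]].
  case: (sC u us uC) => Eu; subst u.
    by rewrite uq in w1q.
  by rewrite uq in w2q.
have uq : uniq q.
  by move: up'; rewrite /= rcons_uniq => /andP [_ /andP [_ ->]].
have qn : q != [::].
  by apply/negP => /eqP qe; move: pp'; rewrite qe /= E12.
case: (rot_to w1C) => i s' hrot.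
have w2s' : w2 \in s'.
  have : w2 \in rot i C by rewrite mem_rot.
  by rewrite hrot inE eq_sym (negbTE ne12).
case/splitPr: w2s' hrot => A B hrot.
have memC' : forall u, (u \in w1 :: A ++ w2 :: B) = (u \in C).
  by move=> u; rewrite -hrot mem_rot.
have oC' : odd_cycle e (w1 :: A ++ w2 :: B).
  rewrite -hrot; case: oC => [[s3 u c] o].
  by split; [split|]; rewrite ?size_rot ?rot_uniq ?rot_cycle.
have eC'' : w2 :: B ++ w1 :: A = rot (size (w1 :: A)) (w1 :: A ++ w2 :: B).
  by rewrite (rot_size_cat (w1::A) (w2::B)).
have oC'' : odd_cycle e (w2 :: B ++ w1 :: A).
  rewrite eC''; case: oC' => [[s3 u c] o].
  by split; [split|]; rewrite ?size_rot ?rot_uniq ?rot_cycle.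
have memC'' : forall u, (u \in w2 :: B ++ w1 :: A) = (u \in C).
  by move=> u; rewrite eC'' mem_rot memC'.
have oS : odd (size (w1 :: A ++ w2 :: B)) by case: oC'.
case oD1: (odd (size (w1 :: A ++ w2 :: rev q))).
  apply: (keyL (r := rev q) hG oC').
  - by rewrite E12.
  - apply: contra qn => /eqP h; apply/eqP; by rewrite -(revK q) h.
  - have := rev_path e w1 (rcons q w2).
    by rewrite last_rcons belast_rcons rev_cons flip pp'.
  - by rewrite rev_uniq.
  - by move=> u; rewrite mem_rev memC'; apply: qC.
  - exact: oD1.
apply: (keyL (r := q) hG oC'').
- by rewrite esym E12.
- exact: qn.
- exact: pp'.
- exact: uq.
- by move=> u; rewrite memC''; apply: qC.
- move: oS oD1; rewrite /= !size_cat /= size_rev !oddD /=.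
  by case: (odd (size A)); case: (odd (size B)); case: (odd (size q)).
Qed.
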